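(* Let $X_\Sigma$ be a projective toric variety and $x\in Z(\Sigma)$. Then the assignment $D\mapsto M^D(x)$, for $D\in\mathrm{Amp}(X_\Sigma)_{\mathbf R}$, is a negative-valued continuous function $\mathrm{Amp}(X_\Sigma)_{\mathbf R}\to\mathbf R$.
   Context: $\Sigma$ complete fan with rays $\Sigma(1)$, generators $u_\rho$, divisors $D_\rho$; a primitive collection is $C\subset\Sigma(1)$ not contained in $\sigma(1)$ for any cone $\sigma$ while every proper subset is; $Z(\Sigma)=\bigcup_CV(x_\rho:\rho\in C)\subset\mathbf C^{\Sigma(1)}$. $\Gamma(G)=\{b\in\mathbf Z^{\Sigma(1)}:\sum b_\rho u_\rho=0\}$, $\langle\chi_D,b\rangle=\sum a_\rho b_\rho$ for $D=\sum a_\rho D_\rho$ extended $\mathbf R$-linearly to $\mathrm{Pic}(X_\Sigma)_{\mathbf R}\times\Gamma(G)_{\mathbf R}$; $\Gamma(G)_{\mathbf R}\subset\mathbf R^{\Sigma(1)}$ with restricted standard norm $\|\cdot\|$. $\mathrm{Amp}(X_\Sigma)_{\mathbf R}$ is the ample cone in $\mathrm{Pic}(X_\Sigma)_{\mathbf R}$ with the Euclidean topology. $\sigma_x=\{v\in\Gamma(G)_{\mathbf R}:v_\rho\ge0\text{ whenever }x_\rho\ne0\}$ and $M^D(x)=\inf_{\lambda\in\sigma_x\setminus\{0\}}\langle\chi_D,\lambda\rangle/\|\lambda\|$. *)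

(* Defs.v *)
From HB Require Import structures.
From mathcomp Require Import all_boot all_order all_algebra.
From mathcomp Require Import complex.
From mathcomp Require Import all_classical all_reals ereal.
Set Implicit Arguments. Unset Strict Implicit. Unset Printing Implicit Defensive.
Import Order.TTheory GRing.Theory Num.Theory.
Local Open Scope ring_scope.
Local Open Scope classical_set_scope.

(* Setting: N = Z^n, rays indexed by 'I_r with primitive generators
   u : 'I_r -> 'rV[int]_n.  A cone of the fan is recorded by its set of rays
   S : {set 'I_r}, i.e. sigma = Cone(u_rho : rho in S), sigma(1) = S. *)

Section Toric.
Variables (R : realType) (n r : nat) (u : 'I_r -> 'rV[int]_n).

Definition uR (i : 'I_r) : 'rV[R]_n := map_mx (fun z : int => z%:~R) (u i).

Definition pair (m v : 'rV[R]_n) : R := \sum_(j < n) m 0 j * v 0 j.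

Definition cone_of (S : {set 'I_r}) : set 'rV[R]_n :=
  [set v | exists lam : 'I_r -> R, (forall i, 0 <= lam i) /\
     (forall i, i \notin S -> lam i = 0) /\ v = \sum_(i < r) lam i *: uR i].

Definition is_face (tau sigma : set 'rV[R]_n) : Prop :=
  exists m : 'rV[R]_n, (forall v, sigma v -> 0 <= pair m v) /\
    tau = sigma `&` [set v | pair m v = 0].

Definition primitive_vec (w : 'rV[int]_n) : Prop :=
  w != 0 /\ forall (k : int) (w' : 'rV[int]_n), 0 < k -> w = k *: w' -> k = 1.

Definition is_fan (Sigma : {set {set 'I_r}}) : Prop :=
  injective u /\ (forall i, primitive_vec (u i)) /\
      (forall i, [set i]%SET \in Sigma) /\
      (forall S, S \in Sigma -> forall v, cone_of S v -> cone_of S (- v) -> v = 0) /\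
      (forall S, S \in Sigma -> forall tau, is_face tau (cone_of S) ->
          (exists2 T, T \in Sigma & tau = cone_of T)) /\
      (forall S T, S \in Sigma -> T \in Sigma ->
          is_face (cone_of S `&` cone_of T) (cone_of S)) /\
      (* sigma(1) = S : the rays of cone_of S are exactly the rho in S *)
      (forall S, S \in Sigma -> forall i, cone_of S (uR i) -> i \in S).

Definition is_complete (Sigma : {set {set 'I_r}}) : Prop :=
  forall v : 'rV[R]_n, exists2 S, S \in Sigma & cone_of S v.

Definition is_maxcone (Sigma : {set {set 'I_r}}) (S : {set 'I_r}) : Prop :=
  S \in Sigma /\ forall T, T \in Sigma -> S \subset T -> T = S.

(* D = sum_rho a_rho D_rho (a real torus-invariant divisor) is ample:
   R-Cartier (local data m_sigma on maximal cones) with strictly convex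
   support function. *)
Definition ample (Sigma : {set {set 'I_r}}) (a : 'I_r -> R) : Prop :=
  forall S, is_maxcone Sigma S -> exists m : 'rV[R]_n,
    (forall i, i \in S -> pair m (uR i) = - a i) /\
    (forall i, i \notin S -> pair m (uR i) > - a i).

Definition projective_fan (Sigma : {set {set 'I_r}}) : Prop :=
  [/\ is_fan Sigma, is_complete Sigma & exists a, ample Sigma a].

(* principal divisor div(chi^m) = sum_rho <m,u_rho> D_rho *)
Definition divm (m : 'rV[R]_n) : 'I_r -> R := fun i => pair m (uR i).

Definition primitive_collection (Sigma : {set {set 'I_r}}) (C : {set 'I_r}) : Prop :=
  (forall S, S \in Sigma -> ~~ (C \subset S)) /\
  (forall C' : {set 'I_r}, C' \proper C -> exists2 S, S \in Sigma & C' \subset S).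

Definition in_Z (Sigma : {set {set 'I_r}}) (x : 'I_r -> R[i]) : Prop :=
  exists C, primitive_collection Sigma C /\ forall i, i \in C -> x i = 0.

Definition GammaR : set ('I_r -> R) :=
  [set b | \sum_(i < r) b i *: uR i = 0].

Definition vnorm (b : 'I_r -> R) : R := Num.sqrt (\sum_(i < r) b i ^+ 2).

Definition sigma_x (x : 'I_r -> R[i]) : set ('I_r -> R) :=
  [set v | GammaR v /\ forall i, x i != 0 -> 0 <= v i].

Definition chi_pair (a b : 'I_r -> R) : R := \sum_(i < r) a i * b i.

Definition MD (a : 'I_r -> R) (x : 'I_r -> R[i]) : \bar R :=
  ereal_inf [set (chi_pair a l / vnorm l)%:E | l in sigma_x x `\ (fun _ => 0)].

End Toric.

(* Main.v *)
Require Import Defs.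
From HB Require Import structures.
From mathcomp Require Import all_boot all_order all_algebra.
From mathcomp Require Import complex.
From mathcomp Require Import all_classical all_reals ereal.
From mathcomp Require Import ring lra.
Import Order.TTheory GRing.Theory Num.Theory.
Local Open Scope ring_scope.

Section H.
Variables (R : realType) (n r : nat) (u : 'I_r -> 'rV[int]_n).

Lemma sumsq_ge0 (b : 'I_r -> R) : 0 <= \sum_(i < r) b i ^+ 2.
Proof. by apply: sumr_ge0 => i _; rewrite sqr_ge0. Qed.

Lemma vnorm_ge0 (b : 'I_r -> R) : 0 <= vnorm b.
Proof. exact: sqrtr_ge0. Qed.

Lemma vnorm_sq (b : 'I_r -> R) : vnorm b ^+ 2 = \sum_(i < r) b i ^+ 2.
Proof. by rewrite /vnorm sqr_sqrtr // sumsq_ge0. Qed.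

Lemma vnorm_eq0 (b : 'I_r -> R) : vnorm b = 0 -> b = (fun _ => 0).
Proof.
move=> /eqP; rewrite /vnorm sqrtr_eq0 => h.
have h0 : \sum_(i < r) b i ^+ 2 = 0 by apply/eqP; rewrite eq_le h sumsq_ge0.
apply: funext => i; move: (psumr_eq0P (fun i _ => sqr_ge0 (b i)) h0) => /(_ i isT).
by move/eqP; rewrite sqrf_eq0 => /eqP.
Qed.

Lemma cs (w l : 'I_r -> R) : chi_pair w l <= vnorm w * vnorm l.
Proof.
set s := vnorm w; set t := vnorm l.
have hs : 0 <= s := vnorm_ge0 w. have ht : 0 <= t := vnorm_ge0 l.
have key : 0 <= 2 * (s * t) * (s * t - chi_pair w l).
  have -> : 2 * (s * t) * (s * t - chi_pair w l) =
     \sum_(i < r) (t * w i - s * l i) ^+ 2.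
    have -> : \sum_(i < r) (t * w i - s * l i) ^+ 2 =
       t ^+ 2 * \sum_(i < r) w i ^+ 2 + s ^+ 2 * \sum_(i < r) l i ^+ 2
        - 2 * s * t * chi_pair w l.
      rewrite /chi_pair !mulr_sumr -big_split -sumrB /=.
      by apply: eq_bigr => i _; ring.
    rewrite -!vnorm_sq -/s -/t; ring.
  exact: sumsq_ge0.
have [st0|stpos] := eqVneq (s * t) 0.
  move: st0 => /eqP; rewrite mulf_eq0 => /orP[] /eqP /vnorm_eq0 ->;
  rewrite /chi_pair big1 ?mulr_ge0 // => i _; by rewrite ?mul0r ?mulr0.
have stp : 0 < 2 * (s * t) by rewrite mulr_gt0 // lt_def stpos mulr_ge0.
by move: key; rewrite pmulr_rge0 // subr_ge0.
Qed.

Local Open Scope classical_set_scope.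

Lemma vnormN (b : 'I_r -> R) : vnorm (fun i => - b i) = vnorm b.
Proof. by rewrite /vnorm; congr Num.sqrt; apply: eq_bigr => i _; rewrite sqrrN. Qed.

Lemma chi_pairN (a b : 'I_r -> R) : chi_pair (fun i => - a i) b = - chi_pair a b.
Proof. by rewrite /chi_pair -sumrN; apply: eq_bigr => i _; rewrite mulNr. Qed.

Lemma lboundM (a l : 'I_r -> R) : l <> (fun _ => 0) -> - vnorm a <= chi_pair a l / vnorm l.
Proof.
move=> l0; have lp : 0 < vnorm l.
  by rewrite lt_def vnorm_ge0 andbT; apply/eqP => /vnorm_eq0.
rewrite ler_pdivlMr // mulNr lerNl -chi_pairN -(vnormN a).
exact: cs.
Qed.

Lemma pair_sum (m : 'rV[R]_n) (c : 'I_r -> R) :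
  pair m (\sum_(i < r) c i *: uR R u i) = \sum_(i < r) c i * pair m (uR R u i).
Proof.
rewrite /pair; under eq_bigr => j _ do rewrite summxE mulr_sumr.
rewrite exchange_big /=; under [RHS]eq_bigr => i _ do rewrite mulr_sumr. apply: eq_bigr => i _.
by apply: eq_bigr => j _; rewrite mxE; ring.
Qed.

Lemma divm_pair (m : 'rV[R]_n) l : GammaR u l -> chi_pair (divm u m) l = 0.
Proof.
move=> hl; rewrite /chi_pair /divm.
have : pair m (\sum_(i < r) l i *: uR R u i) = 0.
  by rewrite hl /pair big1 // => j _; rewrite mxE mulr0.
rewrite pair_sum => h; rewrite -[RHS]h; apply: eq_bigr => i _; exact: mulrC.
Qed.

Lemma MD_ge (a : 'I_r -> R) (x : 'I_r -> R[i]) : ((- vnorm a)%:E <= MD u a x)%E.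
Proof.
by apply: le_ereal_inf_tmp => _ [l [hl hl0] <-]; rewrite lee_fin lboundM.
Qed.

Lemma MD_le (a : 'I_r -> R) (x : 'I_r -> R[i]) l : sigma_x u x l -> l <> (fun _ => 0) ->
  (MD u a x <= (chi_pair a l / vnorm l)%:E)%E.
Proof. by move=> h1 h2; apply: ereal_inf_lbound; exists l. Qed.

Lemma MD_fin (a : 'I_r -> R) (x : 'I_r -> R[i]) l : sigma_x u x l -> l <> (fun _ => 0) -> MD u a x \is a fin_num.
Proof.
move=> h1 h2; apply: fin_real; apply/andP; split.
  exact: (lt_le_trans (ltNyr _) (MD_ge a x)).
exact: (le_lt_trans (MD_le a x l h1 h2) (ltry _)).
Qed.

Lemma MD_lip (a b w : 'I_r -> R) (x : 'I_r -> R[i]) :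
  (forall l, GammaR u l -> chi_pair a l = chi_pair b l + chi_pair w l) ->
  MD u b x \is a fin_num ->
  ((fine (MD u b x) - vnorm w)%:E <= MD u a x)%E.
Proof.
move=> hab hb; apply: le_ereal_inf_tmp => _ [l [[hl1 hl2] hl0] <-].
rewrite lee_fin hab // mulrDl.
have h1 : fine (MD u b x) <= chi_pair b l / vnorm l.
  by rewrite -lee_fin fineK //; apply: MD_le => //; split.
have h2 := lboundM w l hl0.
lra.
Qed.

Lemma vnorm_gt0 (l : 'I_r -> R) : l <> (fun _ => 0) -> 0 < vnorm l.
Proof. by move=> l0; rewrite lt_def vnorm_ge0 andbT; apply/eqP => /vnorm_eq0. Qed.

Lemma maxcone_ex (Sigma : {set {set 'I_r}}) S : S \in Sigma ->
  exists S', is_maxcone Sigma S' /\ (S \subset S')%SET.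
Proof.
move=> hS.
case: (@arg_maxnP _ S (fun T => (T \in Sigma) && (S \subset T))%SET (fun T => #|T|)).
  by rewrite hS subxx.
move=> T /andP[hT sT] hmax; exists T; split => //; split => // T' hT' sub.
have := hmax T'; rewrite hT' (fintype.subset_trans sT sub) => /(_ isT) hle.
by apply/eqP; rewrite eq_sym eqEcard sub; exact: hle.
Qed.

Lemma neg_witness (Sigma : {set {set 'I_r}}) (x : 'I_r -> R[i]) (a : 'I_r -> R) :
  is_complete R u Sigma -> in_Z Sigma x -> ample u Sigma a ->
  exists l, sigma_x u x l /\ l <> (fun _ => 0) /\ chi_pair a l < 0.
Proof.
move=> hc [C [[hC1 _] hx]] ha.
pose cC := fun i : 'I_r => ((i \in C)%:R : R).
have [S hS [lam [lam0 [lamS hv]]]] := hc (\sum_(i < r) cC i *: uR R u i).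
have [S' [hmax sub]] := maxcone_ex _ _ hS.
have [m [m1 m2]] := ha S' hmax.
have hge i : - a i <= pair m (uR R u i).
  by case: (boolP (i \in S')) => hi; [rewrite m1 | exact: ltW (m2 i hi)].
have /subsetPn [j jC jS'] := hC1 S' hmax.1.
pose l := fun i => lam i - cC i.
have chi_eq : chi_pair a l = \sum_(i < r) cC i * (- pair m (uR R u i) - a i).
  have e1 : \sum_(i < r) a i * lam i = - \sum_(i < r) cC i * pair m (uR R u i).
    rewrite -pair_sum hv pair_sum -sumrN; apply: eq_bigr => i _.
    case: (boolP (i \in S')) => hi; first by rewrite m1 //; ring.
    have hiS : i \notin S by apply: contra hi; apply: (fintype.subsetP sub).
    by rewrite lamS //; ring.
  transitivity (\sum_(i < r) a i * lam i - \sum_(i < r) a i * cC i).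
    by rewrite /chi_pair -sumrB; apply: eq_bigr => i _; rewrite /l; ring.
  by rewrite e1 -sumrN -sumrB; apply: eq_bigr => i _; ring.
have neg : chi_pair a l < 0.
  rewrite chi_eq (bigD1 j) //=.
  have h1 : cC j * (- pair m (uR R u j) - a j) < 0.
    by rewrite /cC jC mul1r; have := m2 j jS'; lra.
  have h2 : \sum_(i < r | i != j) cC i * (- pair m (uR R u i) - a i) <= 0.
    apply: sumr_le0 => i _; apply: mulr_ge0_le0; first by rewrite /cC ler0n.
    by have := hge i; lra.
  lra.
exists l; split; [split|split].
- rewrite /GammaR /= /l; under eq_bigr => i _ do rewrite scalerBl.
  by rewrite sumrB -hv subrr.
- move=> i xi; have iC : i \notin C.
    by apply/negP => iC; move: xi; rewrite hx // eqxx.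
  by rewrite /l /cC (negbTE iC) subr0 lam0.
- move=> l0; move: neg; rewrite l0 /chi_pair big1 ?ltxx // => i _.
  by rewrite mulr0.
- exact: neg.
Qed.

End H.
Arguments neg_witness {R n r u}.
Arguments MD_fin {R n r u}.
Arguments MD_le {R n r u}.
Arguments MD_lip {R n r u}.
Arguments divm_pair {R n r u}.
Arguments vnorm_gt0 {R r}.
Arguments chi_pairN {R r}.
Arguments vnormN {R r}.

Theorem corollary5p8 (R : realType) (n r : nat) (u : 'I_r -> 'rV[int]_n)
    (Sigma : {set {set 'I_r}}) (x : 'I_r -> R[i]) :
  projective_fan R u Sigma -> in_Z Sigma x ->
  (forall a, ample u Sigma a -> MD u a x \is a fin_num /\ (MD u a x < 0)%E) /\
  (forall a, ample u Sigma a -> forall e : R, 0 < e -> exists2 d : R, 0 < d &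
     forall b, ample u Sigma b ->
       (exists m : 'rV[R]_n, vnorm (fun i => a i - b i - divm u m i) < d) ->
       `|fine (MD u a x) - fine (MD u b x)| < e).
Proof.
move=> [hfan hc _] hZ.
have fin : forall a, ample u Sigma a -> MD u a x \is a fin_num /\ (MD u a x < 0)%E.
  move=> a ha; have [l [hl [hl0 hneg]]] := neg_witness Sigma x a hc hZ ha.
  split; first exact: (MD_fin a x l hl hl0).
  apply: (le_lt_trans (MD_le a x l hl hl0)); rewrite lte_fin.
  by rewrite ltr_pdivrMr ?vnorm_gt0 // mul0r.
split => // a ha e e0; exists e => // b hb [m hm].
set w := fun i => a i - b i - divm u m i.
have [fa _] := fin a ha; have [fb _] := fin b hb.
have hw l : GammaR u l -> chi_pair a l = chi_pair b l + chi_pair w l.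
  move=> hl; have hd := divm_pair m l hl.
  have -> : chi_pair w l = chi_pair a l - chi_pair b l - chi_pair (divm u m) l.
    by rewrite /chi_pair -!sumrB; apply: eq_bigr => i _; rewrite /w; ring.
  rewrite hd; ring.
have h1 := MD_lip a b w x hw fb.
have h2 := MD_lip b a (fun i => - w i) x
  (fun l hl => ltac:(rewrite chi_pairN (hw l hl); ring)) fa.
rewrite vnormN in h2.
rewrite -(fineK fa) lee_fin in h1; rewrite -(fineK fb) lee_fin in h2.
rewrite ltr_norml; apply/andP; split; lra.
Qed.
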